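(* Let $m\ge 2$, $n\ge 3$, let $\mathcal{C}^3_{m,n}=(V_1,V_2,E)$, and let $e\in E$ be a hyperedge containing exactly one vertex of $V_1$ and two vertices of $V_2$. Then the Seidel spectrum of $\mathcal{C}^3_{m,n}-e$ consists of the eigenvalue $2n-1$ with multiplicity $m-2$, the eigenvalue $2m-1$ with multiplicity $n-3$, and the five roots $\rho_1,\dots,\rho_5$ of $\xi_1(\rho)=0$, where \begin{align*} \xi_1(\rho)={}&-\rho^5+(-5+7m+5n-4mn)\rho^4\\ &+(46+4m-18m^2+4n-22mn+2m^2n+4m^3n-8n^2-6mn^2+4m^2n^2+4mn^3)\rho^3\\ &+(286-234m-46m^2+36m^3-206n+62mn-10m^2n+52m^3n-16m^4n+8n^2-10mn^2\\ &\quad+64m^2n^2-24m^3n^2+4n^3+40mn^3-24m^2n^3-8mn^4)\rho^2\\ &+(83+76m-366m^2+248m^3-40m^4-228n-90mn+238m^2n+20m^3n-88m^4n+16m^5n\\ &\quad-40n^2+246mn^2+132m^2n^2-184m^3n^2+48m^4n^2+40n^3-28mn^3-160m^2n^3\\ &\quad+48m^3n^3-16mn^4+32m^2n^4)\rho\\ &+(-921+2387m-2322m^2+1012m^3-168m^4+873n-2250mn+1994m^2n-732m^3n\\ &\quad+72m^4n+16m^5n-408n^2+1274mn^2-680m^2n^2-160m^3n^2+160m^4n^2-32m^5n^2\\ &\quad+84n^3-368mn^3+40m^2n^3+160m^3n^3-32m^4n^3+24mn^4+32m^2n^4-32m^3n^4). \end{align*}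
   Context: For a hypergraph $\mathcal{H}$ and distinct vertices $i,j$, the co-degree $c_{ij}$ is the number of hyperedges containing both $i$ and $j$. The Seidel matrix $\mathcal{S}(\mathcal{H})$ has zero diagonal and $(i,j)$-entry $1-2c_{ij}$ for $i\neq j$; its eigenvalues (with multiplicity) form the Seidel spectrum of $\mathcal{H}$. The complete $3$-uniform bipartite hypergraph $\mathcal{C}^3_{m,n}=(V_1,V_2,E)$ has vertex set $V_1\sqcup V_2$, $|V_1|=m$, $|V_2|=n$, and $E$ = all $3$-subsets meeting both $V_1$ and $V_2$. For a hyperedge $e$, $\mathcal{H}-e$ denotes the hypergraph with the same vertex set and hyperedge set $E\setminus\{e\}$. *)

(* Defs.v *)
From HB Require Import structures.
From mathcomp Require Import all_boot all_order all_algebra.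
Set Implicit Arguments. Unset Strict Implicit. Unset Printing Implicit Defensive.
Import Order.TTheory GRing.Theory Num.Theory.
Local Open Scope ring_scope.

Definition codegree (N : nat) (E : {set {set 'I_N}}) (i j : 'I_N) : nat :=
  #|[set f in E | (i \in f) && (j \in f)]|.

Definition seidel_mx (R : nzRingType) (N : nat) (E : {set {set 'I_N}}) : 'M[R]_N :=
  \matrix_(i, j) (if i == j then 0 else 1 - 2 * (codegree E i j)%:R).

(* s (a list, read as a multiset) is the Seidel spectrum of the hypergraph:
   the eigenvalues with (algebraic) multiplicity, i.e. the roots of the
   characteristic polynomial of the Seidel matrix. *)
Definition is_seidel_spectrum (R : comNzRingType) (N : nat)
  (E : {set {set 'I_N}}) (s : seq R) : Prop :=
  char_poly (seidel_mx R E) = \prod_(x <- s) ('X - x%:P).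

Definition part1 (m n : nat) : {set 'I_(m + n)} := [set i : 'I_(m + n) | (i < m)%N].
Definition part2 (m n : nat) : {set 'I_(m + n)} := [set i : 'I_(m + n) | (m <= i)%N].

Definition C3_edges (m n : nat) : {set {set 'I_(m + n)}} :=
  [set f : {set 'I_(m + n)} | [&& #|f| == 3,
      f :&: part1 m n != set0 & f :&: part2 m n != set0]].

Definition del_edge (N : nat) (E : {set {set 'I_N}}) (e : {set 'I_N}) :=
  E :\ e.

Definition xi1 (R : nzRingType) (m n : nat) : {poly R} :=
  let M : int := m%:Z in let N : int := n%:Z in
  let c4 : int := -5 + 7*M + 5*N - 4*M*N in
  let c3 : int := 46 + 4*M - 18*M^+2 + 4*N - 22*M*N + 2*M^+2*N + 4*M^+3*N
      - 8*N^+2 - 6*M*N^+2 + 4*M^+2*N^+2 + 4*M*N^+3 in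
  let c2 : int := 286 - 234*M - 46*M^+2 + 36*M^+3 - 206*N + 62*M*N - 10*M^+2*N
      + 52*M^+3*N - 16*M^+4*N + 8*N^+2 - 10*M*N^+2
      + 64*M^+2*N^+2 - 24*M^+3*N^+2 + 4*N^+3 + 40*M*N^+3 - 24*M^+2*N^+3 - 8*M*N^+4 in
  let c1 : int := 83 + 76*M - 366*M^+2 + 248*M^+3 - 40*M^+4 - 228*N - 90*M*N
      + 238*M^+2*N + 20*M^+3*N - 88*M^+4*N + 16*M^+5*N
      - 40*N^+2 + 246*M*N^+2 + 132*M^+2*N^+2 - 184*M^+3*N^+2 + 48*M^+4*N^+2
      + 40*N^+3 - 28*M*N^+3 - 160*M^+2*N^+3
      + 48*M^+3*N^+3 - 16*M*N^+4 + 32*M^+2*N^+4 in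
  let c0 : int := -921 + 2387*M - 2322*M^+2 + 1012*M^+3 - 168*M^+4 + 873*N
      - 2250*M*N + 1994*M^+2*N - 732*M^+3*N
      + 72*M^+4*N + 16*M^+5*N - 408*N^+2 + 1274*M*N^+2 - 680*M^+2*N^+2
      - 160*M^+3*N^+2 + 160*M^+4*N^+2 - 32*M^+5*N^+2
      + 84*N^+3 - 368*M*N^+3 + 40*M^+2*N^+3 + 160*M^+3*N^+3 - 32*M^+4*N^+3
      + 24*M*N^+4 + 32*M^+2*N^+4 - 32*M^+3*N^+4 in
  - 'X^5 + (c4%:~R)%:P * 'X^4 + (c3%:~R)%:P * 'X^3 + (c2%:~R)%:P * 'X^2
    + (c1%:~R)%:P * 'X + (c0%:~R)%:P.

(* Main.v *)
Require Import Defs.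
From HB Require Import structures.
From mathcomp Require Import all_boot all_order all_algebra.
From mathcomp Require Import ring zify.
Import Order.TTheory GRing.Theory Num.Theory.

Section Comb.
Variables m n : nat.
Local Notation N := (m + n).

Lemma card_cond (P : pred 'I_N) :
  #|[set k | P k]| = \sum_(k < m) P (lshift n k) + \sum_(k < n) P (rshift m k).
Proof.
rewrite -sum1_card big_mkcond big_split_ord /=.
by congr (_ + _); apply: eq_bigr => k _; rewrite inE; case: (P _).
Qed.

Lemma card_lt : #|[set k : 'I_N | (k < m)%N]| = m.
Proof.
rewrite card_cond /= [X in (X + _)%N](eq_bigr (fun _ => 1%N)) => [|k _]; last by rewrite /= ltn_ord.
rewrite [X in (_ + X)%N]big1 => [|k _]; last by rewrite /= ltnNge leq_addr.
by rewrite sum1_card card_ord addn0.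
Qed.

Lemma card_ge : #|[set k : 'I_N | (m <= k)%N]| = n.
Proof.
rewrite card_cond /= [X in (_ + X)%N](eq_bigr (fun _ => 1%N)) => [|k _]; last by rewrite /= leq_addr.
rewrite [X in (X + _)%N]big1 => [|k _]; last by rewrite /= leqNgt ltn_ord.
by rewrite sum1_card card_ord add0n.
Qed.

Lemma meets3 (P : {set 'I_N}) i j k :
  ([set i; j; k] :&: P != set0) = [|| i \in P, j \in P | k \in P].
Proof.
apply/set0Pn/idP.
  by case=> x; rewrite !inE => /andP [/orP [/orP [] | ] /eqP -> ->]; rewrite ?orbT.
case/or3P => h; [exists i | exists j | exists k]; by rewrite !inE eqxx h ?orbT.
Qed.

Lemma cards3 (i j k : 'I_N) : i != j -> i != k -> j != k -> #|[set i; j; k]| = 3.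
Proof.
move=> hij hik hjk; rewrite setUC cardsU1 cards2 hij !inE negb_or.
by rewrite eq_sym hik eq_sym hjk.
Qed.

Lemma card_D2 (i j : 'I_N) : i != j -> #|[set: 'I_N] :\ i :\ j| = (m + n - 2)%N.
Proof.
move=> hij; have := cardsD1 i [set: 'I_N]; have := cardsD1 j ([set: 'I_N] :\ i).
rewrite !inE eq_sym hij cardsT card_ord /= => ->.
by move: #|_| => c; rewrite !add1n => ->; rewrite subSS subn1.
Qed.

Definition base (i j : 'I_N) : nat :=
  if (i < m)%N && (j < m)%N then n
  else if (m <= i)%N && (m <= j)%N then m else (m + n - 2)%N.

Lemma count_edges (i j : 'I_N) : i != j ->
  #|[set f in C3_edges m n | (i \in f) && (j \in f)]| = base i j.
Proof.
move=> hij.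
pose K := [set k : 'I_N | [&& k != i, k != j,
   [|| (i < m)%N, (j < m)%N | (k < m)%N] & [|| (m <= i)%N, (m <= j)%N | (m <= k)%N]]].
have -> : [set f in C3_edges m n | (i \in f) && (j \in f)] =
    (fun k => [set i; j; k]) @: K.
  apply/setP => f; rewrite !inE; apply/idP/idP.
    case/andP => /andP [/eqP c3 /andP [m1 m2]] /andP [fi fj].
    have : #|f :\ i :\ j| == 1%N.
      move: c3; rewrite (cardsD1 i) fi (cardsD1 j) !inE eq_sym hij fj /=.
      by rewrite !add1n => -[->].
    case/cards1P => k hk.
    have kf : k \in f :\ i :\ j by rewrite hk set11.
    move: kf; rewrite !inE => /and3P [kj ki kf].
    have ef : f = [set i; j; k].
      apply/setP => x; rewrite !inE; apply/idP/idP => [xf|].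
        case: (eqVneq x i) => [->|xi]; first by [].
        case: (eqVneq x j) => [->|xj]; first by [].
        have : x \in f :\ i :\ j by rewrite !inE xi xj xf.
        by rewrite hk inE => ->; rewrite orbT.
      by case/orP => [/orP [] |] /eqP ->.
    apply/imsetP; exists k => //.
    rewrite !inE kj ki /=; move: m1 m2; rewrite ef !meets3 /part1 /part2 !inE.
    by move=> -> ->.
  case/imsetP => k; rewrite !inE => /and4P [ki kj h1 h2] ->.
  rewrite cards3 // 1?eq_sym // !meets3 /part1 /part2 !inE h1 h2 !eqxx ?orbT.
  by [].
rewrite card_in_imset; last first.
  move=> k1 k2; rewrite !inE => /andP [k1i /andP [k1j _]] /andP [k2i /andP [k2j _]] E.
  have : k1 \in [set i; j; k2] by rewrite -E !inE eqxx !orbT.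
  by rewrite !inE (negPf k1i) (negPf k1j) => /eqP.
rewrite /base !(leqNgt m); case hi: (i < m); case hj: (j < m) => /=.
- transitivity #|[set k : 'I_N | (m <= k)%N]|; last exact: card_ge.
  apply: eq_card => k; rewrite !inE /= !(leqNgt m) hi hj /=.
  case: (ltnP k m) => hk; rewrite ?andbF ?andbT //=.
  by apply/andP; split; apply/eqP => E; move: hk; rewrite E leqNgt ?hi ?hj.
- transitivity #|[set: 'I_N] :\ i :\ j|.
    apply: eq_card => k; rewrite !inE /= !(leqNgt m) hi hj /=.
    by case: (k != i); case: (k != j).
  exact: card_D2.
- transitivity #|[set: 'I_N] :\ i :\ j|.
    apply: eq_card => k; rewrite !inE /= !(leqNgt m) hi hj /= ?orbT.
    by case: (k != i); case: (k != j).
  exact: card_D2.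
- transitivity #|[set k : 'I_N | (k < m)%N]|; last exact: card_lt.
  apply: eq_card => k; rewrite !inE /= !(leqNgt m) hi hj /=.
  case hk: (k < m); rewrite ?andbF ?andbT //=.
  by apply/andP; split; apply/eqP => E; move: hk; rewrite E ?hi ?hj.
Qed.
End Comb.


Section Ent.
Variables m n : nat.
Hypothesis hm : (2 <= m)%N.
Hypothesis hn : (3 <= n)%N.
Variable e : {set 'I_(m + n)}.
Hypothesis he : e \in C3_edges m n.
Hypothesis he1 : #|e :&: part1 m n| = 1%N.
Hypothesis he2 : #|e :&: part2 m n| = 2%N.

Lemma codeg_del (i j : 'I_(m + n)) : i != j ->
  codegree (del_edge (C3_edges m n) e) i j = (base m n i j - ((i \in e) && (j \in e)))%N.
Proof.
move=> hij; rewrite /codegree /del_edge.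
have -> : [set f in C3_edges m n :\ e | (i \in f) && (j \in f)] =
  [set f in C3_edges m n | (i \in f) && (j \in f)] :\ e.
  by apply/setP => f; rewrite !inE; case: (f != e); case: (#|f| == 3%N); case: (_ != set0); case: (_ != set0).
have := cardsD1 e [set f in C3_edges m n | (i \in f) && (j \in f)].
by rewrite count_edges // inE he /= => ->; rewrite addKn.
Qed.

Definition tn (i : 'I_(m + n)) : nat :=
  if (i < m)%N then (if i \in e then 0 else 1) else (if i \in e then 2 else 3).
Definition tc (i : 'I_(m + n)) : 'I_4 := inord (tn i).
Lemma tc_val i : (tc i : nat) = tn i.
Proof. by rewrite inordK // /tn; case: (i < m)%N; case: (i \in e). Qed.

Local Open Scope ring_scope.
Variable R : comNzRingType.
Definition bse (k l : nat) : R :=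
  if (k < 2)%N && (l < 2)%N then n%:R else if (2 <= k)%N && (2 <= l)%N then m%:R
  else m%:R + n%:R - 2.
Definition Fv (k l : nat) : R := 1 - 2 * (bse k l - ((~~ odd k) && (~~ odd l))%:R).

Lemma seidel_entry (i j : 'I_(m + n)) :
  seidel_mx R (del_edge (C3_edges m n) e) i j = if i == j then 0 else Fv (tc i) (tc j).
Proof.
rewrite mxE; case: eqP => // /eqP hij.
rewrite codeg_del // natrB; last first.
  have hb : (0 < base m n i j)%N by rewrite /base; case: ifP => _; [|case: ifP => _]; lia.
  by case: ((i \in e) && (j \in e)).
have E : ((m + n - 2)%N%:R : R) = m%:R + n%:R - 2 by rewrite natrB ?natrD //; lia.
rewrite /Fv /bse /base !tc_val /tn !(leqNgt m).
by case: (i < m)%N; case: (j < m)%N; case: (i \in e); case: (j \in e) => //=; rewrite ?E.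
Qed.

Lemma sn0 : #|[set i | tc i == 0%N :> nat]| = 1%N.
Proof.
transitivity #|e :&: part1 m n|; last exact: he1.
apply: eq_card => i; rewrite !inE tc_val /tn.
by case: (i < m)%N; case: (i \in e).
Qed.
Lemma sn2 : #|[set i | tc i == 2%N :> nat]| = 2%N.
Proof.
transitivity #|e :&: part2 m n|; last exact: he2.
apply: eq_card => i; rewrite !inE tc_val /tn (leqNgt m).
by case: (i < m)%N; case: (i \in e).
Qed.
Lemma sn1 : #|[set i | tc i == 1%N :> nat]| = (m - 1)%N.
Proof.
have -> : [set i | tc i == 1%N :> nat] = part1 m n :\: e.
  apply/setP => i; rewrite !inE tc_val /tn.
  by case: (i < m)%N; case: (i \in e).
by rewrite cardsD setIC he1 /part1 card_lt.
Qed.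
Lemma sn3 : #|[set i | tc i == 3%N :> nat]| = (n - 2)%N.
Proof.
have -> : [set i | tc i == 3%N :> nat] = part2 m n :\: e.
  apply/setP => i; rewrite !inE tc_val /tn (leqNgt m).
  by case: (i < m)%N; case: (i \in e).
by rewrite cardsD setIC he2 /part2 card_ge.
Qed.
End Ent.

Local Open Scope ring_scope.
Section Det.
Variable R : comNzRingType.

Lemma minor_mx n (f : nat -> nat -> R) (i0 j0 : 'I_n.+1) :
  row' i0 (col' j0 (\matrix_(i < n.+1, j < n.+1) f i j)) =
  \matrix_(i < n, j < n) f (bump i0 i) (bump j0 j).
Proof. by apply/matrixP => i j; rewrite !mxE. Qed.

Lemma det_minor n (f : nat -> nat -> R) (i0 j0 : 'I_n.+1) (D : (nat -> nat -> R) -> R)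
  (HD : forall g : nat -> nat -> R, \det (\matrix_(i < n, j < n) g i j) = D g) :
  \det (row' i0 (col' j0 (\matrix_(i < n.+1, j < n.+1) f i j))) =
  D (fun a b => f (bump i0 a) (bump j0 b)).
Proof. by rewrite minor_mx; apply: HD. Qed.

Definition det2f (f : nat -> nat -> R) := f 0%N 0%N * f 1%N 1%N - f 0%N 1%N * f 1%N 0%N.
Lemma det2 (f : nat -> nat -> R) : \det (\matrix_(i < 2, j < 2) f i j) = det2f f.
Proof.
rewrite (expand_det_row _ ord0) !big_ord_recl big_ord0 /cofactor !minor_mx.
rewrite !det_mx11 !mxE /det2f /= /bump /=. ring.
Qed.

Definition det3f (f : nat -> nat -> R) :=
  f 0%N 0%N * (f 1%N 1%N * f 2%N 2%N - f 1%N 2%N * f 2%N 1%N)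
  - f 0%N 1%N * (f 1%N 0%N * f 2%N 2%N - f 1%N 2%N * f 2%N 0%N)
  + f 0%N 2%N * (f 1%N 0%N * f 2%N 1%N - f 1%N 1%N * f 2%N 0%N).
Lemma det3 (f : nat -> nat -> R) : \det (\matrix_(i < 3, j < 3) f i j) = det3f f.
Proof.
rewrite (expand_det_row _ ord0) !big_ord_recl big_ord0 /cofactor.
rewrite !(det_minor _ _ _ _ _ det2) !mxE /det2f /det3f /= /bump /=. ring.
Qed.

Definition det4f (f : nat -> nat -> R) :=
  f 0%N 0%N * det3f (fun a b => f (bump 0 a) (bump 0 b))
  - f 0%N 1%N * det3f (fun a b => f (bump 0 a) (bump 1 b))
  + f 0%N 2%N * det3f (fun a b => f (bump 0 a) (bump 2 b))
  - f 0%N 3%N * det3f (fun a b => f (bump 0 a) (bump 3 b)).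
Lemma det4 (f : nat -> nat -> R) : \det (\matrix_(i < 4, j < 4) f i j) = det4f f.
Proof.
rewrite (expand_det_row _ ord0) !big_ord_recl big_ord0 /cofactor.
rewrite !(det_minor _ _ _ _ _ det3) !mxE /det4f /=. ring.
Qed.
End Det.


Lemma sylvester (R : comNzRingType) p q (A : 'M[R]_(p, q)) (B : 'M[R]_(q, p)) :
  \det (1%:M - A *m B) = \det (1%:M - B *m A).
Proof.
have E1 : block_mx 1%:M A B 1%:M =
  block_mx 1%:M 0 B 1%:M *m block_mx 1%:M A 0 (1%:M - B *m A).
  rewrite mulmx_block !mul1mx !mul0mx !mulmx1 ?addr0 ?add0r ?mulmx0.
  by rewrite addrC subrK.
have E2 : block_mx 1%:M A B 1%:M =
  block_mx (1%:M - A *m B) A 0 1%:M *m block_mx 1%:M 0 B 1%:M.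
  rewrite mulmx_block !mul1mx !mul0mx !mulmx1 ?addr0 ?add0r ?mulmx0.
  by rewrite subrK add0r.
have := congr1 determinant E1; rewrite E2 !det_mulmx !det_lblock !det_ublock !det1 !mul1r !mulr1 => ->; done.
Qed.

Section Red.
Variable R : fieldType.
Variable N : nat.
Variable t : 'I_N -> 'I_4.
Variable G : nat -> nat -> R.
Variable d : nat -> R.
Hypothesis dnz : forall k : 'I_4, d k != 0.
Definition sn (b : nat) : nat := #|[set i | t i == b :> nat]|.

Lemma sum_class (l : nat) (c : R) :
  \sum_i (t i == l :> nat)%:R * c = (sn l)%:R * c.
Proof.
rewrite (eq_bigr (fun i => if i \in [set i | t i == l :> nat] then c else 0)).
  by rewrite -big_mkcond /= sumr_const mulr_natl.
by move=> i _; rewrite inE; case: (_ == _); rewrite ?mul1r ?mul0r.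
Qed.

Lemma red :
  \det (\matrix_(i, j) ((i == j)%:R * d (t i) - G (t i) (t j))) * \prod_(k < 4) d k
  = \prod_(k < 4) d k ^+ sn k *
    \det (\matrix_(k < 4, l < 4) ((k == l :> nat)%:R * d k - G k l * (sn l)%:R)).
Proof.
pose Dg := diag_mx (\row_i d (t i)).
pose A := \matrix_(i < N, l < 4) ((t i == l :> nat)%:R / d l).
pose B := \matrix_(k < 4, j < N) G k (t j).
have E1 : \matrix_(i, j) ((i == j)%:R * d (t i) - G (t i) (t j)) = Dg *m (1%:M - A *m B).
  apply/matrixP => i j; rewrite mul_diag_mx !mxE.
  rewrite (bigD1 (t i)) //= big1 => [|l /negPf hl]; last first.
    by rewrite !mxE (inj_eq val_inj) eq_sym hl !mul0r.
  rewrite /A /B !mxE eqxx mul1r addr0 mulrBr.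
  congr (_ - _); first by rewrite mulrC.
  by rewrite mulrA divff ?mul1r // dnz.
have E2 : (1%:M - B *m A) *m diag_mx (\row_(k < 4) d k) =
   \matrix_(k < 4, l < 4) ((k == l :> nat)%:R * d k - G k l * (sn l)%:R).
  apply/matrixP => k l; rewrite mul_mx_diag !mxE.
  rewrite (eq_bigr (fun i => (t i == l :> nat)%:R * (G k l / d l))); last first.
    move=> i _; rewrite /A /B !mxE; case: eqP => [->|_]; first by rewrite mulr1n mul1r mulrA mul1r.
    by rewrite mulr0n !mul0r mulr0.
  rewrite sum_class mulrBl; congr (_ - _).
    case: (eqVneq k l) => [->|]; first by rewrite eqxx.
    by move=> /negPf; rewrite (inj_eq val_inj) => ->; rewrite !mul0r.
  by rewrite mulrCA -!mulrA mulVf ?mulr1 ?dnz // mulrC.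
have E3 : \prod_(i < N) d (t i) = \prod_(k < 4) d k ^+ sn k.
  rewrite (partition_big (fun i => t i) predT) //=; apply: eq_bigr => k _.
  rewrite (eq_bigr (fun _ => d k)) => [|i /eqP -> //].
  rewrite prodr_const /sn; congr (_ ^+ _); apply: eq_card => i.
  by rewrite inE (inj_eq val_inj).
rewrite E1 det_mulmx det_diag sylvester.
rewrite (eq_bigr (fun i => d (t i))) => [|i _]; last by rewrite mxE.
rewrite E3 -mulrA; congr (_ * _).
rewrite -E2 det_mulmx det_diag; congr (_ * _); apply: eq_bigr => k _; by rewrite mxE.
Qed.
End Red.


Lemma prod_nseq (R : comNzRingType) k (a : R) (F : R -> {poly R}) :
  \prod_(x <- nseq k a) F x = F a ^+ k.
Proof. by elim: k => [|k IH]; rewrite ?big_nil ?expr0 // big_cons IH exprS. Qed.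

Lemma xi1E (R : comNzRingType) m n (x : R) : (xi1 R m n).[x] =
 - x ^+ 5 + (-5 + 7 * m%:R + 5 * n%:R - 4 * m%:R * n%:R) * x ^+ 4 + (46 + 4 * m%:R - 18 * m%:R ^+ 2 + 4 * n%:R - 22 * m%:R * n%:R + 2 * m%:R ^+ 2 * n%:R + 4 * m%:R ^+ 3 * n%:R - 8 * n%:R ^+ 2 - 6 * m%:R * n%:R ^+ 2 + 4 * m%:R ^+ 2 * n%:R ^+ 2 + 4 * m%:R * n%:R ^+ 3) * x ^+ 3 + (286 - 234 * m%:R - 46 * m%:R ^+ 2 + 36 * m%:R ^+ 3 - 206 * n%:R + 62 * m%:R * n%:R - 10 * m%:R ^+ 2 * n%:R + 52 * m%:R ^+ 3 * n%:R - 16 * m%:R ^+ 4 * n%:R + 8 * n%:R ^+ 2 - 10 * m%:R * n%:R ^+ 2 + 64 * m%:R ^+ 2 * n%:R ^+ 2 - 24 * m%:R ^+ 3 * n%:R ^+ 2 + 4 * n%:R ^+ 3 + 40 * m%:R * n%:R ^+ 3 - 24 * m%:R ^+ 2 * n%:R ^+ 3 - 8 * m%:R * n%:R ^+ 4) * x ^+ 2 + (83 + 76 * m%:R - 366 * m%:R ^+ 2 + 248 * m%:R ^+ 3 - 40 * m%:R ^+ 4 - 228 * n%:R - 90 * m%:R * n%:R + 238 * m%:R ^+ 2 * n%:R + 20 * m%:R ^+ 3 * n%:R - 88 * m%:R ^+ 4 * n%:R + 16 * m%:R ^+ 5 * n%:R - 40 * n%:R ^+ 2 + 246 * m%:R *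 n%:R ^+ 2 + 132 * m%:R ^+ 2 * n%:R ^+ 2 - 184 * m%:R ^+ 3 * n%:R ^+ 2 + 48 * m%:R ^+ 4 * n%:R ^+ 2 + 40 * n%:R ^+ 3 - 28 * m%:R * n%:R ^+ 3 - 160 * m%:R ^+ 2 * n%:R ^+ 3 + 48 * m%:R ^+ 3 * n%:R ^+ 3 - 16 * m%:R * n%:R ^+ 4 + 32 * m%:R ^+ 2 * n%:R ^+ 4) * x + (-921 + 2387 * m%:R - 2322 * m%:R ^+ 2 + 1012 * m%:R ^+ 3 - 168 * m%:R ^+ 4 + 873 * n%:R - 2250 * m%:R * n%:R + 1994 * m%:R ^+ 2 * n%:R - 732 * m%:R ^+ 3 * n%:R + 72 * m%:R ^+ 4 * n%:R + 16 * m%:R ^+ 5 * n%:R - 408 * n%:R ^+ 2 + 1274 * m%:R * n%:R ^+ 2 - 680 * m%:R ^+ 2 * n%:R ^+ 2 - 160 * m%:R ^+ 3 * n%:R ^+ 2 + 160 * m%:R ^+ 4 * n%:R ^+ 2 - 32 * m%:R ^+ 5 * n%:R ^+ 2 + 84 * n%:R ^+ 3 - 368 * m%:R * n%:R ^+ 3 + 40 * m%:R ^+ 2 * n%:R ^+ 3 + 160 * m%:R ^+ 3 * n%:R ^+ 3 - 32 * m%:R ^+ 4 * n%:R ^+ 3 + 24 * m%:R * n%:R ^+ 4 + 32 * m%:R ^+ 2 * n%:R ^+ 4 - 32 * m%:R ^+ 3 * n%:R ^+ 4).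
Proof.
rewrite /xi1; cbv zeta.
rewrite !(hornerD, hornerN, hornerX, hornerC, hornerM, hornerXn, hornerCM).
ring.
Qed.

Theorem theorem2p6 (R : numClosedFieldType) (m n : nat)
  (hm : (2 <= m)%N) (hn : (3 <= n)%N)
  (e : {set 'I_(m + n)}) (he : e \in C3_edges m n)
  (he1 : #|e :&: part1 m n| = 1%N) (he2 : #|e :&: part2 m n| = 2%N)
  (rho : seq R) (hrho : xi1 R m n = - \prod_(r <- rho) ('X - r%:P)) :
  is_seidel_spectrum (del_edge (C3_edges m n) e)
    (nseq (m - 2) (2 * n%:R - 1) ++ nseq (n - 3) (2 * m%:R - 1) ++ rho).
Proof.
rewrite /is_seidel_spectrum !big_cat /= !prod_nseq.
rewrite -[\prod_(r <- rho) _]opprK -hrho.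
set S := seidel_mx R _.
set P := _ * _.
apply/eqP; rewrite -subr_eq0; apply/eqP.
set Q := _ - _.
pose xk (k : nat) : R := (k + 2 * (m + n))%:R.
have key : forall k, Q.[xk k] = 0.
  move=> k; set x := xk k.
  pose d (a : nat) : R := x + Fv m n R a a.
  have dnz : forall a : 'I_4, d a != 0.
    case=> [[|[|[|[|a]]]] //= _]; rewrite /d /Fv /bse /x /xk /=.
    - by rewrite (_ : _ + _ = (k + 2 * m + 3)%:R :> R) ?pnatr_eq0 ?addnS //; ring.
    - by rewrite (_ : _ + _ = (k + 2 * m + 1)%:R :> R) ?pnatr_eq0 ?addnS //; ring.
    - by rewrite (_ : _ + _ = (k + 2 * n + 3)%:R :> R) ?pnatr_eq0 ?addnS //; ring.
    - by rewrite (_ : _ + _ = (k + 2 * n + 1)%:R :> R) ?pnatr_eq0 ?addnS //; ring.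
  have Hdet : (char_poly S).[x] =
      \det (\matrix_(i, j) ((i == j)%:R * d (tc m n e i) - Fv m n R (tc m n e i) (tc m n e j))).
    rewrite /char_poly -horner_evalE -det_map_mx; congr (\det _).
    have ES : S = \matrix_(i, j) (if i == j then 0 else Fv m n R (tc m n e i) (tc m n e j)).
      by apply/matrixP => i j; rewrite [RHS]mxE /S seidel_entry.
    rewrite ES; apply/matrixP => i j; rewrite !mxE.
    case: eqP => [->|_] /=; rewrite ?horner_evalE ?hornerE /=.
      by rewrite subr0 /d addrK.
    by [].
  have Hred := @red R (m + n) (tc m n e) (Fv m n R) d dnz.
  rewrite -Hdet in Hred.
  have pnz : \prod_(a < 4) d a != 0 by apply/prodf_neq0 => a _; exact: dnz.
  rewrite /Q hornerD hornerN; apply/eqP; rewrite subr_eq0; apply/eqP.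
  apply: (mulIf pnz); rewrite Hred.
  rewrite (@det4 _ (fun a b : nat => (a == b)%:R * d a - Fv m n R a b * (@sn (m + n) (tc m n e) b)%:R)).
  rewrite /det4f /det3f /= !big_ord_recl big_ord0 /=.
  rewrite /sn !sn0 ?sn1 ?sn2 ?sn3 // ?big_ord0 /bump /= ?add0n ?addn0 ?add1n.
  rewrite /d /Fv /bse /=.
  have c1 : ((m - 1)%N%:R : R) = m%:R - 1 by rewrite natrB //; lia.
  have c2 : ((n - 2)%N%:R : R) = n%:R - 2 by rewrite natrB //; lia.
  rewrite c1 c2.
  have -> : (m - 1 = (m - 2).+1)%N by lia.
  have -> : (n - 2 = (n - 3).+1)%N by lia.
  rewrite /P !hornerM hornerN !horner_exp !hornerXsubC xi1E !exprS.
  move: (m - 2)%N (n - 3)%N => a b.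

  have eA : x - (2 * n%:R - 1) = x + (1 - 2 * (n%:R - 0)) by ring.
  have eB : x - (2 * m%:R - 1) = x + (1 - 2 * (m%:R - 0)) by ring.
  rewrite eA eB.
  move: (_ ^+ a) => A; move: (_ ^+ b) => B.
  ring.
apply: (@roots_geq_poly_eq0 _ Q [seq xk k | k <- iota 0 (size Q)]).
- by apply/allP => y /mapP [k _ ->]; rewrite /root key.
- rewrite map_inj_uniq ?iota_uniq // => a b /eqP; rewrite /xk eqr_nat => /eqP; lia.
- by rewrite size_map size_iota.
Qed.
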